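(* For any cardinal $\kappa$, there exists a set of cardinality $\kappa$ consisting of pairwise non-isomorphic groups, each of which is not finitely generated, not strongly bounded, and SB-generated.
   Context: A subset of a group $G$ is strongly bounded if it has finite diameter in every left-invariant metric on $G$; a group is strongly bounded if it is a strongly bounded subset of itself, and SB-generated if it is generated by a strongly bounded subset. *)

(* Defs.v *)
From mathcomp Require Import all_boot.
From Stdlib Require Import Reals.

Set Implicit Arguments.
Unset Strict Implicit.
Unset Printing Implicit Defensive.

Local Open Scope group_scope.

Definition left_invariant_metric (G : groupType) (d : G -> G -> R) : Prop :=
  (forall x y : G, (0 <= d x y)%R) /\
  (forall x y : G, d x y = 0%R <-> x = y) /\
  (forall x y : G, d x y = d y x) /\
  (forall x y z : G, (d x z <= d x y + d y z)%R) /\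
  (forall g x y : G, d (g * x) (g * y) = d x y).

Definition finite_diameter (G : groupType) (d : G -> G -> R) (A : G -> Prop) : Prop :=
  exists M : R, forall x y : G, A x -> A y -> (d x y <= M)%R.

Definition strongly_bounded_subset (G : groupType) (A : G -> Prop) : Prop :=
  forall d : G -> G -> R, left_invariant_metric d -> finite_diameter d A.

Definition strongly_bounded (G : groupType) : Prop :=
  strongly_bounded_subset (fun _ : G => True).

Definition generates (G : groupType) (A : G -> Prop) : Prop :=
  forall S : G -> Prop,
    S 1 ->
    (forall x y : G, S x -> S y -> S (x * y)) ->
    (forall x : G, S x -> S x^-1) ->
    (forall x : G, A x -> S x) ->
    forall g : G, S g.

Definition finitely_generated (G : groupType) : Prop :=
  exists s : seq G, generates (fun x : G => x \in s).

Definition SB_generated (G : groupType) : Prop :=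
  exists A : G -> Prop, strongly_bounded_subset A /\ generates A.

Definition group_isomorphic (G H : groupType) : Prop :=
  exists f : G -> H, bijective f /\ (forall x y : G, f (x * y) = f x * f y).

(* Main.v *)
From HB Require Import structures.
Require Import Defs.
From mathcomp Require Import all_boot.
From mathcomp Require Import boolp wochoice.
Set Implicit Arguments. Unset Strict Implicit. Unset Printing Implicit Defensive.

Definition A5L : seq (seq nat) := [:: [::0;1;2;3;4];[::0;1;3;4;2];[::0;1;4;2;3];[::0;2;1;4;3];[::0;2;3;1;4];[::0;2;4;3;1];[::0;3;1;2;4];[::0;3;2;4;1];[::0;3;4;1;2];[::0;4;1;3;2];[::0;4;2;1;3];[::0;4;3;2;1];[::1;0;2;4;3];[::1;0;3;2;4];[::1;0;4;3;2];[::1;2;0;3;4];[::1;2;3;4;0];[::1;2;4;0;3];[::1;3;0;4;2];[::1;3;2;0;4];[::1;3;4;2;0];[::1;4;0;2;3];[::1;4;2;3;0];[::1;4;3;0;2];[::2;0;1;3;4];[::2;0;3;4;1];[::2;0;4;1;3];[::2;1;0;4;3];[::2;1;3;0;4];[::2;1;4;3;0];[::2;3;0;1;4];[::2;3;1;4;0];[::2;3;4;0;1];[::2;4;0;3;1];[::2;4;1;0;3];[::2;4;3;1;0];[::3;0;1;4;2];[::3;0;2;1;4];[::3;0;4;2;1];[::3;1;0;2;4];[::3;1;2;4;0];[::3;1;4;0;2];[::3;2;0;4;1];[::3;2;1;0;4];[::3;2;4;1;0];[::3;4;0;1;2];[::3;4;1;2;0];[::3;4;2;0;1];[::4;0;1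;2;3];[::4;0;2;3;1];[::4;0;3;1;2];[::4;1;0;3;2];[::4;1;2;0;3];[::4;1;3;2;0];[::4;2;0;1;3];[::4;2;1;3;0];[::4;2;3;0;1];[::4;3;0;2;1];[::4;3;1;0;2];[::4;3;2;1;0]].

Definition pcomp (p q : seq nat) : seq nat := map (nth 0 p) q.
Definition pinv (p : seq nat) : seq nat := map (fun i => index i p) (iota 0 5).
Definition pid : seq nat := iota 0 5.

Lemma comp_closed : all (fun p => all (fun q => pcomp p q \in A5L) A5L) A5L.
Proof. by vm_compute. Qed.
Lemma inv_closed : all (fun p => pinv p \in A5L) A5L.
Proof. by vm_compute. Qed.
Lemma id_in : pid \in A5L. Proof. by vm_compute. Qed.
Lemma comp_assoc : all (fun p => all (fun q => all (fun r => pcomp p (pcomp q r) == pcomp (pcomp p q) r) A5L) A5L) A5L.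
Proof. by vm_compute. Qed.
Lemma comp_laws : all (fun p => [&& pcomp pid p == p, pcomp p pid == p, pcomp (pinv p) p == pid & pcomp p (pinv p) == pid]) A5L.
Proof. by vm_compute. Qed.


Local Open Scope group_scope.
Definition Q := {p : seq nat | p \in A5L}.
Definition qmul (x y : Q) : Q := exist (fun p => p \in A5L) (pcomp (sval x) (sval y)) (allP (allP comp_closed _ (svalP x)) _ (svalP y)).
Definition qinv (x : Q) : Q := exist (fun p => p \in A5L) (pinv (sval x)) (allP inv_closed _ (svalP x)).
Definition qone : Q := exist (fun p => p \in A5L) pid id_in.

Lemma qmulA : associative qmul.
Proof. move=> x y z; apply: val_inj => /=.
by apply/eqP; apply: (allP (allP (allP comp_assoc _ (svalP x)) _ (svalP y)) _ (svalP z)).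
Qed.
Lemma qmul1 : left_id qone qmul.
Proof. move=> x; apply: val_inj => /=. by have /and4P[/eqP ? _ _ _] := allP comp_laws _ (svalP x). Qed.
Lemma qmulg1 : right_id qone qmul.
Proof. move=> x; apply: val_inj => /=. by have /and4P[_ /eqP ? _ _] := allP comp_laws _ (svalP x). Qed.
Lemma qmulV : left_inverse qone qinv qmul.
Proof. move=> x; apply: val_inj => /=. by have /and4P[_ _ /eqP ? _] := allP comp_laws _ (svalP x). Qed.
Lemma qmulgV : right_inverse qone qinv qmul.
Proof. move=> x; apply: val_inj => /=. by have /and4P[_ _ _ /eqP ?] := allP comp_laws _ (svalP x). Qed.

HB.instance Definition _ := [Equality of Q by <:].
HB.instance Definition _ := [Choice of Q by <:].
HB.instance Definition _ := isGroup.Build Q qmulA qmul1 qmulg1 qmulV qmulgV.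

Lemma gam_in : ([::1;0;3;2;4])%N \in A5L. Proof. by vm_compute. Qed.
Definition gam : Q := exist (fun p => p \in A5L) _ gam_in.

Lemma gam_prop_b : all (fun q => has (fun r1 => has (fun r2 =>
   q == pcomp (pcomp (pcomp r1 (sval gam)) (pinv r1)) (pcomp (pcomp r2 (sval gam)) (pinv r2))) A5L) A5L) A5L.
Proof. by vm_compute. Qed.

Lemma gam_prop (q : Q) : exists r1 r2 : Q, q = (r1 * gam * r1^-1) * (r2 * gam * r2^-1).
Proof.
have /hasP[r1 r1in /hasP[r2 r2in /eqP E]] := allP gam_prop_b _ (svalP q).
exists (exist (fun p => p \in A5L) _ r1in), (exist (fun p => p \in A5L) _ r2in); apply: val_inj => /=. exact: E.
Qed.

Lemma gam_neq1 : gam <> 1.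
Proof. by move/(congr1 val). Qed.
From Stdlib Require Import Reals ZArith Lia Lra FunctionalExtensionality Eqdep.

Section W.
Variable Q : groupType.
Variable X : Type.
Definition W := ((Z -> X -> Q) * Z)%type.
HB.instance Definition _ := gen_eqMixin W.
HB.instance Definition _ := gen_choiceMixin W.
Definition wmul (a b : W) : W := (fun n x => a.1 n x * b.1 (n - a.2)%Z x, (a.2 + b.2)%Z).
Definition wone : W := (fun _ _ => 1, 0%Z).
Definition winv (a : W) : W := (fun n x => (a.1 (n + a.2)%Z x)^-1, (- a.2)%Z).
Lemma wmulA : associative wmul.
Proof.
move=> [a m] [b k] [c l]; rewrite /wmul /=; congr (_, _); last lia.
apply: functional_extensionality => n; apply: functional_extensionality => x.
by rewrite mulgA (_ : (n - m - k = n - (m + k))%Z) //; lia.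
Qed.
Lemma wmul1 : left_id wone wmul.
Proof.
move=> [a m]; rewrite /wmul /=; congr (_, _).
apply: functional_extensionality => n; apply: functional_extensionality => x.
by rewrite mul1g Z.sub_0_r.
Qed.
Lemma wmulg1 : right_id wone wmul.
Proof.
move=> [a m]; rewrite /wmul /=; congr (_, _); last lia.
apply: functional_extensionality => n; apply: functional_extensionality => x.
by rewrite mulg1.
Qed.
Lemma wmulV : left_inverse wone winv wmul.
Proof.
move=> [a m]; rewrite /wmul /=; congr (_, _); last lia.
apply: functional_extensionality => n; apply: functional_extensionality => x.
by rewrite (_ : (n - - m = n + m)%Z) ?mulVg //; lia.
Qed.
Lemma wmulgV : right_inverse wone winv wmul.
Proof.
move=> [a m]; rewrite /wmul /=; congr (_, _); last lia.
apply: functional_extensionality => n; apply: functional_extensionality => x.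
by rewrite (_ : (n - m + m = n)%Z) ?mulgV //; lia.
Qed.
HB.instance Definition _ := isGroup.Build W wmulA wmul1 wmulg1 wmulV wmulgV.
End W.

Section Metric.
Variable G : groupType.
Variable d : G -> G -> R.
Hypothesis Hd : left_invariant_metric d.
Definition len (g : G) := d 1 g.

Lemma len_mul x y : (len (x * y) <= len x + len y)%R.
Proof.
have [_ [_ [_ [tri inv]]]] := Hd.
rewrite /len; apply: Rle_trans (tri _ x _) _.
by rewrite -{2}(mulg1 x) inv; apply: Rle_refl.
Qed.

Lemma len_inv x : len x^-1 = len x.
Proof.
have [_ [_ [sym [tri inv]]]] := Hd.
by rewrite /len -(inv x) mulg1 mulgV sym.
Qed.

Lemma len_ge0 x : (0 <= len x)%R.
Proof. by have [h _] := Hd; apply: h. Qed.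

Lemma dist_len x y : (d x y <= len x + len y)%R.
Proof.
have [_ [_ [sym [tri inv]]]] := Hd.
by apply: Rle_trans (tri _ 1 _) _; rewrite sym; apply: Rle_refl.
Qed.

Lemma len_conj x y : (len (x * y * x^-1) <= len x + len y + len x)%R.
Proof.
apply: Rle_trans (len_mul _ _) _; rewrite len_inv.
apply: Rplus_le_compat_r; exact: len_mul.
Qed.
End Metric.

Definition blk (k : nat) (n : Z) : bool :=
  Z.eqb (n mod 2 ^ (Z.of_nat k + 1)) (2 ^ Z.of_nat k).

Lemma pow2_pos (e : Z) : (0 <= e)%Z -> (0 < 2 ^ e)%Z.
Proof. move=> h; apply: Z.pow_pos_nonneg; lia. Qed.

Lemma blk_uniq0 (k kk : nat) (n : Z) : (k < kk)%coq_nat -> blk k n -> blk kk n -> False.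
Proof.
rewrite /blk => lt /Z.eqb_spec h1 /Z.eqb_spec h2.
set e := Z.of_nat k in h1; set e' := Z.of_nat kk in h2.
have he : (0 <= e)%Z by rewrite /e; lia.
have hee : (e + 1 <= e')%Z by rewrite /e /e'; lia.
have P1 : (2 ^ (e' + 1) = 2 ^ (e' - e) * 2 ^ (e + 1))%Z.
  by rewrite -Z.pow_add_r; [congr (_ ^ _)%Z; lia | lia | lia].
have P2 : (2 ^ e' = 2 ^ (e' - e - 1) * 2 ^ (e + 1))%Z.
  by rewrite -Z.pow_add_r; [congr (_ ^ _)%Z; lia | lia | lia].
have hd : (2 ^ (e + 1) | 2 ^ (e' + 1))%Z by rewrite P1; exists (2 ^ (e' - e))%Z.
have hp := pow2_pos he.
have hp1 : (2 ^ (e + 1) <> 0)%Z by have := pow2_pos (Z.le_le_succ_r _ _ he); lia.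
have := Z.mod_mod_divide n _ _ hd; rewrite h1 h2 P2 Z.mod_mul // => h; lia.
Qed.

Lemma blk_uniq (k kk : nat) (n : Z) : blk k n -> blk kk n -> k = kk.
Proof.
move=> h1 h2; case: (Nat.lt_total k kk) => [lt|[//|lt]]; exfalso.
- exact: blk_uniq0 lt h1 h2.
- exact: blk_uniq0 lt h2 h1.
Qed.

Definition bsz (k : nat) : nat := Z.to_nat (2 ^ (Z.of_nat k + 1)).

Lemma blk_cover (k : nat) (n : Z) : exists j : nat, (j < bsz k)%nat /\ blk k (n - Z.of_nat j)%Z.
Proof.
set e := Z.of_nat k; set M := (2 ^ (e + 1))%Z.
have he : (0 <= e)%Z by rewrite /e; lia.
have hM : (0 < M)%Z by apply: pow2_pos; lia.
have hEM : (2 ^ e < M)%Z by rewrite /M Z.pow_add_r ?Z.pow_1_r; [have := pow2_pos he; lia|lia|lia].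
set j := ((n - 2 ^ e) mod M)%Z.
have hj : (0 <= j < M)%Z by apply: Z.mod_pos_bound.
exists (Z.to_nat j); split.
  by apply/ltP; rewrite /bsz -/e -/M; lia.
rewrite /blk -/e -/M; apply/Z.eqb_spec.
rewrite Z2Nat.id; last lia.
have := Z.div_mod (n - 2 ^ e) M; rewrite -/j => hdm.
rewrite (_ : (n - j = 2 ^ e + ((n - 2 ^ e) / M) * M)%Z); last by lia.
rewrite Z_mod_plus_full Z.mod_small //; have := pow2_pos he; lia.
Qed.

Section Main.
Variable X : Type.
Local Notation G := (W Q X).
Definition base (b : Z -> X -> Q) : G := (b, 0%Z).
Definition tt (j : Z) : G := (fun _ _ => 1, j).

Lemma fext2 (f g : Z -> X -> Q) : (forall n x, f n x = g n x) -> f = g.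
Proof. by move=> h; do 2 apply: functional_extensionality => ?; apply: h. Qed.

Lemma base_mul b1 b2 : base b1 * base b2 = base (fun n x => b1 n x * b2 n x).
Proof.
change (wmul (b1, 0%Z) (b2, 0%Z) = (fun n x => b1 n x * b2 n x, 0%Z)).
by rewrite /wmul /=; congr (_, _); apply: fext2 => n x; rewrite Z.sub_0_r.
Qed.

Lemma base_inv b : (base b)^-1 = base (fun n x => (b n x)^-1).
Proof.
change (winv (b, 0%Z) = (fun n x => (b n x)^-1, 0%Z)).
by rewrite /winv /=; congr (_, _); apply: fext2 => n x; rewrite Z.add_0_r.
Qed.

Lemma tt_mul a b : tt a * tt b = tt (a + b).
Proof.
change (wmul (tt a) (tt b) = tt (a + b)).
by rewrite /wmul /=; congr (_, _); apply: fext2 => n x; rewrite mul1g.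
Qed.

Lemma tt_inv a : (tt a)^-1 = tt (- a).
Proof.
change (winv (tt a) = tt (- a)).
by rewrite /winv /=; congr (_, _); apply: fext2 => n x; rewrite invg1.
Qed.

Lemma tt_conj j h : tt j * base h * (tt j)^-1 = base (fun n x => h (n - j)%Z x).
Proof.
rewrite tt_inv.
change (wmul (wmul (tt j) (base h)) (tt (- j)) = base (fun n x => h (n - j)%Z x)).
rewrite /wmul /=; congr (_, _); try lia.
by apply: fext2 => n x; rewrite mul1g mulg1 ?Z.sub_0_r.
Qed.

Lemma decomp (g : G) : g = base g.1 * tt g.2.
Proof.
case: g => b m.
change ((b, m) = wmul (base b) (tt m)).
rewrite /wmul /=; congr (_, _); try lia.
by apply: fext2 => n x; rewrite mulg1.
Qed.

Lemma conj_base g c : base g * base c * (base g)^-1 = base (fun n x => g n x * c n x * (g n x)^-1).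
Proof. by rewrite base_inv !base_mul. Qed.

End Main.

Section Bound.
Variable X : Type.
Local Notation G := (W Q X).
Variable d : G -> G -> R.
Hypothesis Hd : left_invariant_metric d.
Local Notation len := (len d).

Definition one_f : X -> Q := fun _ => 1.

Lemma pigeon : exists k : nat, forall p : Z -> X -> Q, exists g,
  (len (base g) <= INR k)%R /\ forall n, blk k n -> g n = p n.
Proof.
apply: contrapT => H.
have H' : forall k : nat, exists p : Z -> X -> Q, forall g, (len (base g) <= INR k)%R ->
    exists n, blk k n /\ g n <> p n.
  move=> k; apply: contrapT => Hk; apply: H; exists k => p.
  apply: contrapT => Hp; apply: Hk; exists p => g Hg.
  apply: contrapT => Hn; apply: Hp; exists g; split => // n Hb.
  by apply: contrapT => Hne; apply: Hn; exists n; split.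
have [P HP] := choice H'.
pose gs n := match pselect (exists k, blk k n) with
             | left h => P (proj1_sig (cid h)) n | right _ => one_f end.
have gsE k n : blk k n -> gs n = P k n.
  rewrite /gs => hb; case: pselect => [h|h]; last by exfalso; apply: h; exists k.
  by case: (cid h) => /= k0 hk0; rewrite (blk_uniq hk0 hb).
have [K HK] := INR_unbounded (len (base gs)).
have [n [hb hne]] := HP K gs (Rlt_le _ _ HK).
by apply: hne; apply: gsE.
Qed.

Definition full k := forall p : Z -> X -> Q, exists g,
  (len (base g) <= INR k)%R /\ forall n, blk k n -> g n = p n.

Lemma block_bounded k : full k -> exists L0, forall h : Z -> X -> Q,
  (forall n, ~~ blk k n -> h n = one_f) -> (len (base h) <= L0)%R.
Proof.
move=> Hf.
pose Gm n : X -> Q := if blk k n then (fun _ => gam) else one_f.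
exists (2 * (INR k + len (base Gm) + INR k))%R => h hs.
have Hc : forall nx : Z * X, exists r : Q * Q,
    h nx.1 nx.2 = (r.1 * gam * r.1^-1) * (r.2 * gam * r.2^-1).
  by move=> nx; have [r1 [r2 E]] := gam_prop (h nx.1 nx.2); exists (r1, r2).
have [Rf HR] := choice Hc.
have [g1 [Hl1 Hg1]] := Hf (fun n x => (Rf (n, x)).1).
have [g2 [Hl2 Hg2]] := Hf (fun n x => (Rf (n, x)).2).
have -> : base h = (base g1 * base Gm * (base g1)^-1) * (base g2 * base Gm * (base g2)^-1).
  rewrite !conj_base base_mul; congr base; apply: fext2 => n x.
  case hb: (blk k n).
  - by rewrite /Gm hb (Hg1 n hb) (Hg2 n hb); apply: (HR (n, x)).
  - have hs' := hs n (negbT hb).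
    rewrite /Gm hb hs' /one_f.
    by rewrite !mulg1 !mulgV mul1g.
apply: Rle_trans (len_mul Hd _ _) _.
have E1 := len_conj Hd (base g1) (base Gm).
have E2 := len_conj Hd (base g2) (base Gm).
apply: Rle_trans (Rplus_le_compat _ _ _ _ E1 E2) _.
move: Hl1 Hl2; move: (len (base g1)) (len (base g2)) (len (base Gm)) => a b c Ha Hb; lra.
Qed.
End Bound.

Section Bound2.
Variable X : Type.
Local Notation G := (W Q X).
Variable d : G -> G -> R.
Hypothesis Hd : left_invariant_metric d.
Local Notation len := (len d).

Definition UJ k (J : nat) (n : Z) := exists j : nat, (j < J)%nat /\ blk k (n - Z.of_nat j)%Z.

Lemma base_one : base (fun _ _ => 1) = (1 : G).
Proof. by []. Qed.

Lemma len_one : len (1 : G) = 0%R.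
Proof. by have [_ [h _]] := Hd; apply/h. Qed.

Lemma step3 k L0 : (forall h : Z -> X -> Q,
  (forall n, ~~ blk k n -> h n = @one_f X) -> (len (base h) <= L0)%R) ->
  forall J : nat, exists c, forall b : Z -> X -> Q,
    (forall n, ~ UJ k J n -> b n = @one_f X) -> (len (base b) <= c)%R.
Proof.
move=> HL; elim=> [|J [c Hc]].
  exists 0%R => b hb.
  have -> : b = (fun _ _ => 1) by apply: fext2 => n x; rewrite hb //; case=> j [].
  by rewrite base_one len_one; apply: Rle_refl.
exists (c + (len (tt X (Z.of_nat J)) + L0 + len (tt X (Z.of_nat J))))%R => b hb.
pose b' n := if pselect (UJ k J n) then b n else @one_f X.
pose b'' n := if pselect (UJ k J n) then @one_f X else b n.
pose h n := b'' (n + Z.of_nat J)%Z.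
have E : base b = base b' * (tt X (Z.of_nat J) * base h * (tt X (Z.of_nat J))^-1).
  rewrite tt_conj base_mul; congr base; apply: fext2 => n x.
  rewrite /h /b' /b'' Z.sub_add.
  by case: pselect => h0; rewrite /one_f ?mulg1 ?mul1g.
have H1 : (len (base b') <= c)%R.
  by apply: Hc => n hn; rewrite /b'; case: pselect.
have H2 : (len (base h) <= L0)%R.
  apply: HL => n hn; rewrite /h /b''; case: pselect => // hU.
  apply: hb => -[j [hj hbj]].
  have [hjJ|hjJ] : (j < J)%nat \/ j = J.
    by move/ltP: hj => hj; case: (Nat.eq_dec j J) => e; [right|left; apply/ltP; lia].
  - by apply: hU; exists j; split.
  - subst j; move: hbj; rewrite (_ : (n + Z.of_nat J - Z.of_nat J = n)%Z); last lia.
    by move=> hbj; move: hn; rewrite hbj.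
rewrite E; apply: Rle_trans (len_mul Hd _ _) _.
have H3 := len_conj Hd (tt X (Z.of_nat J)) (base h).
move: H1 H2 H3; move: (len (base b')) (len (base h)) (len (tt X (Z.of_nat J)))
  (len (tt X (Z.of_nat J) * base h * (tt X (Z.of_nat J))^-1)) => a1 a2 a3 a4; lra.
Qed.

Lemma base_bounded : exists M, forall b : Z -> X -> Q, (len (base b) <= M)%R.
Proof.
have [k Hk] := @pigeon X d.
have [L0 HL] := @block_bounded X d Hd k Hk.
have [c Hc] := step3 HL (bsz k).
exists c => b; apply: Hc => n hn; exfalso; apply: hn.
have [j [hj hb]] := blk_cover k n; by exists j.
Qed.
End Bound2.

Section Props.
Variable X : Type.
Local Notation G := (W Q X).

Lemma W_SB : SB_generated G.
Proof.
exists (fun g : G => g.2 = 0%Z \/ g = tt X 1).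
split.
- move=> d Hd.
  have [M HM] := base_bounded Hd.
  have Hl : forall g : G, g.2 = 0%Z \/ g = tt X 1 -> (len d g <= Rmax M (len d (tt X 1)))%R.
    move=> [b m] /= [->|->].
    + by apply: Rle_trans (HM b) (Rmax_l _ _).
    + exact: Rmax_r.
  exists (2 * Rmax M (len d (tt X 1)))%R => x y hx hy.
  apply: Rle_trans (dist_len Hd x y) _.
  have := Hl x hx; have := Hl y hy.
  move: (len d x) (len d y) (Rmax M (len d (tt X 1))) => a b c; lra.
- move=> S S1 SM SV SA.
  have St : forall m : Z, S (tt X m).
    have Sn : forall n : nat, S (tt X (Z.of_nat n)).
      elim=> [|n IH]; first exact: S1.
      rewrite Nat2Z.inj_succ -Z.add_1_r -tt_mul.
      by apply: SM => //; apply: SA; right.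
    case=> [|p|p]; first exact: (Sn 0%nat).
    + by rewrite -positive_nat_Z; apply: Sn.
    + rewrite -Pos2Z.opp_pos -tt_inv; apply: SV.
      by rewrite -positive_nat_Z; apply: Sn.
  move=> g; rewrite (decomp g); apply: SM; last exact: St.
  by apply: SA; left.
Qed.

Definition dZ (x y : G) : R :=
  (Rabs (IZR (x.2 - y.2)) + (if x == y then 0 else 1))%R.

Lemma mul2 (g x : G) : (g * x).2 = (g.2 + x.2)%Z.
Proof. by []. Qed.

Lemma dZ_metric : left_invariant_metric dZ.
Proof.
rewrite /dZ; split; [|split; [|split; [|split]]].
- move=> x y; have := Rabs_pos (IZR (x.2 - y.2)); case: (x == y); lra.
- move=> x y; split.
  + case: eqP => [//|_] h; have := Rabs_pos (IZR (x.2 - y.2)); lra.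
  + by move=> ->; rewrite eqxx Z.sub_diag Rabs_R0; lra.
- move=> x y; rewrite eq_sym; congr (_ + _)%R.
  by rewrite -Rabs_Ropp -opp_IZR; congr (Rabs (IZR _)); lia.
- move=> x y z.
  have -> : (x.2 - z.2 = (x.2 - y.2) + (y.2 - z.2))%Z by lia.
  rewrite plus_IZR; have := Rabs_triang (IZR (x.2 - y.2)) (IZR (y.2 - z.2)).
  case: (eqVneq x z) => [->|nxz]; first by case: (z == y); case: (y == z); lra.
  case: (eqVneq x y) => [exy|nxy]; last by case: (y == z); lra.
  by subst y; rewrite (negbTE nxz); lra.
- move=> g x y; rewrite !mul2 (eqtype.inj_eq (mulgI g)).
  by rewrite (_ : (g.2 + x.2 - (g.2 + y.2) = x.2 - y.2)%Z) //; lia.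
Qed.

Lemma W_notSB : ~ strongly_bounded G.
Proof.
move=> H; have [M HM] := H _ dZ_metric.
have := HM 1 (tt X (up M)) I I.
have [hup _] := archimed M.
rewrite /dZ /= opp_IZR Rabs_Ropp.
have := Rle_abs (IZR (up M)).
case: (_ == _); lra.
Qed.

Definition letter (s : seq G) (a : nat * bool) : G :=
  if a.2 then nth 1 s a.1 else (nth 1 s a.1)^-1.
Definition ev (s : seq G) (w : seq (nat * bool)) : G :=
  foldr (fun a acc => letter s a * acc) 1 w.

Lemma ev_cat s w1 w2 : ev s (w1 ++ w2) = ev s w1 * ev s w2.
Proof. elim: w1 => [|a w IH] /=; first by rewrite mul1g. by rewrite IH mulgA. Qed.

Definition flipb (a : nat * bool) := (a.1, ~~ a.2).

Lemma ev_inv s w : ev s (rev (map flipb w)) = (ev s w)^-1.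
Proof.
elim: w => [|a w IH] /=; first by rewrite invg1.
rewrite rev_cons -cats1 ev_cat IH /= mulg1 invgM; congr (_ * _).
by rewrite /letter /flipb /=; case: a.2; rewrite ?invgK.
Qed.

Lemma W_notfg (x0 : X) : ~ finitely_generated G.
Proof.
move=> [s Hs].
have Hall : forall g : G, exists w, ev s w = g.
  apply: Hs.
  - by exists [::].
  - by move=> x y [w1 <-] [w2 <-]; exists (w1 ++ w2); rewrite ev_cat.
  - by move=> x [w <-]; exists (rev (map flipb w)); rewrite ev_inv.
  - move=> x xs; exists [:: (index x s, true)].
    by rewrite /= /letter /= nth_index // mulg1.
pose f (n : nat) : G := if unpickle n is Some w then ev s w else 1.
pose gs := base (fun n x => if (f (Z.to_nat n)).1 n x == gam then 1 else gam).
have [w Hw] := Hall gs.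
have HN : f (pickle w) = gs by rewrite /f pickleK.
have E : (f (pickle w)).1 (Z.of_nat (pickle w)) x0 = gs.1 (Z.of_nat (pickle w)) x0 by rewrite HN.
move: E; rewrite /= Nat2Z.id; set v := (f (pickle w)).1 _ x0.
case: eqP => [-> /esym|ne] h; first by apply: gam_neq1.
exact: ne h.
Qed.
End Props.

Definition Wg (Y : Type) : groupType := Group.clone (W Q Y) _.

Lemma cantor (C : Type) (h : (C -> Prop) -> C) : injective h -> False.
Proof.
move=> hi.
pose D c := exists P, h P = c /\ ~ P c.
have nD : ~ D (h D).
  move=> dD; have [P [e nP]] := dD; have E := hi _ _ e; subst P; exact: nP dD.
apply nD; exists D; split; [reflexivity | exact: nD].
Qed.

Definition iota_W (Y : Type) (y : Y) : W Q Y :=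
  base (fun _ y' => if pselect (y' = y) then gam else 1).

Lemma iota_W_inj (Y : Type) : injective (@iota_W Y).
Proof.
move=> a b e; have := congr1 (fun g : W Q Y => g.1 0%Z a) e.
rewrite /iota_W /base /=.
case: (pselect (a = a)) => [haa|[]] //.
case: (pselect (a = b)) => // nab h.
all: by move=> *; exfalso; apply: gam_neq1.
Qed.

Lemma cast_inj (A B : Type) (e : A = B) : injective (fun a : A => eq_rect A (fun T => T) a B e).
Proof. by case: B / e. Qed.

Definition XF (K : Type) (lt : K -> K -> Prop) (i : K) (rec : forall j, lt j i -> Type) : Type :=
  ({j : K & {h : lt j i & W Q (rec j h)}} -> Prop).

Definition Xrec (K : Type) (lt : K -> K -> Prop) (wf : well_founded lt) : K -> Type :=
  Fix wf (fun _ => Type) (@XF K lt).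

Lemma Xrec_eq (K : Type) (lt : K -> K -> Prop) (wf : well_founded lt) (i : K) :
  Xrec wf i = ({j : K & {h : lt j i & W Q (Xrec wf j)}} -> Prop).
Proof.
rewrite /Xrec Fix_eq //.
move=> x f g hfg; have : f = g.
  by apply: functional_extensionality_dep => y; apply: functional_extensionality_dep => p; apply: hfg.
by move=> ->.
Qed.

Lemma noninj (K : Type) (lt : K -> K -> Prop) (wf : well_founded lt) (i j : K) :
  lt j i -> forall f : W Q (Xrec wf i) -> W Q (Xrec wf j), injective f -> False.
Proof.
move=> hji f fi.
pose C := {j : K & {h : lt j i & W Q (Xrec wf j)}}.
pose emb (w : W Q (Xrec wf j)) : C := existT _ j (existT _ hji w).
have embi : injective emb.
  by move=> a b /(inj_pair2 _ _ _ _ _) /(inj_pair2 _ _ _ _ _).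
pose c (P : C -> Prop) : Xrec wf i := eq_rect _ (fun T => T) P _ (esym (Xrec_eq wf i)).
apply: (@cantor C (fun P => emb (f (iota_W (c P))))).
move=> P1 P2 e; have e1 := embi _ _ e; have e2 := fi _ _ e1.
have e3 := iota_W_inj e2; exact: (cast_inj e3).
Qed.

Lemma Xrec_inh (K : Type) (lt : K -> K -> Prop) (wf : well_founded lt) (i : K) : Xrec wf i.
Proof. by rewrite Xrec_eq; exact: (fun _ => True). Qed.

Section WO.
Variable T : eqType.
Variable R : rel T.
Hypothesis HR : well_order R.

Definition two (x y : T) : {pred T} := fun z => (z == x) || (z == y).

Lemma wo_total x y : R x y \/ R y x.
Proof.
have [|z [[zin lb] _]] := @HR (two x y); first by exists x; rewrite unfold_in /two eqxx.
move: zin; rewrite unfold_in /two => /orP[/eqP ez|/eqP ez]; subst z.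
- by left; apply: lb; rewrite unfold_in /two eqxx orbT.
- by right; apply: lb; rewrite unfold_in /two eqxx.
Qed.

Lemma wo_refl x : R x x.
Proof. by case: (wo_total x x). Qed.

Lemma wo_anti x y : R x y -> R y x -> x = y.
Proof.
move=> hxy hyx.
have [|z [_ U]] := @HR (two x y); first by exists x; rewrite unfold_in /two eqxx.
have mx : minimum_of R (two x y) x.
  split; first by rewrite unfold_in /two eqxx.
  by move=> w; rewrite unfold_in /two => /orP[/eqP ew|/eqP ew]; subst w => //; apply: wo_refl.
have my : minimum_of R (two x y) y.
  split; first by rewrite unfold_in /two eqxx orbT.
  by move=> w; rewrite unfold_in /two => /orP[/eqP ew|/eqP ew]; subst w => //; apply: wo_refl.
by rewrite -(U _ mx) (U _ my).
Qed.

Definition slt (x y : T) : Prop := R x y && (x != y).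

Lemma slt_wf : well_founded slt.
Proof.
move=> x; apply: contrapT => nacc.
pose A : {pred T} := fun y => ~~ `[< Acc slt y >].
have [|z [[zA lb] _]] := @HR A.
  by exists x; rewrite unfold_in /A; apply/negP => /asboolP.
move: zA; rewrite unfold_in /A => /negP; apply; apply/asboolP.
constructor => y /andP[ryz nyz].
apply: contrapT => ny.
have yA : y \in A by rewrite unfold_in /A; apply/negP => /asboolP.
have := wo_anti ryz (lb _ yA) => e; by rewrite e eqxx in nyz.
Qed.
End WO.

Theorem corollary6p2 :
  forall K : Type@{Group.axioms_.u0},
  exists F : K -> groupType,
    (forall i j : K, i <> j -> ~ group_isomorphic (F i) (F j)) /\
    (forall i : K,
        ~ finitely_generated (F i) /\
        ~ strongly_bounded (F i) /\
        SB_generated (F i)).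
Proof.
move=> K.
have [Rr HR] := well_ordering_principle {classic K}.
have wf := slt_wf HR.
exists (fun i => Wg (Xrec wf i)).
split.
- move=> i j nij [f [bij _]].
  have [hij|hji] : slt Rr i j \/ slt Rr j i.
    case: (wo_total HR i j) => h; [left|right]; rewrite /slt h /=; apply/eqP => // e.
    by apply: nij.
  + case: bij => g fg gf.
    exact: (noninj hij (can_inj gf)).
  + exact: (noninj hji (bij_inj bij)).
- move=> i; split; first exact: (W_notfg (Xrec_inh wf i)).
  split; [exact: W_notSB | exact: W_SB].
Qed.
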